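(* Fix $\alpha\in\mathbb{R}^*\setminus\{\pm1\}$ and let $L=\mathbb{Z}\ltimes\mathbb{R}$ be the Lie group (with $\mathbb{Z}$ discrete) in which $(z,0)(0,r)(-z,0)=(0,\alpha^z r)$ for $z\in\mathbb{Z}$, $r\in\mathbb{R}$. Then $L$ has the topological $R_\infty$-property.
   Context: For an automorphism $\varphi$ of a group $G$, the $\varphi$-twisted conjugacy classes are the equivalence classes of the relation $x\sim_\varphi y$ iff $y=gx\varphi(g)^{-1}$ for some $g\in G$; $R(\varphi)\in\mathbb{N}\cup\{\infty\}$ is the number of these classes. A topological group $G$ has the topological $R_\infty$-property if $R(\varphi)=\infty$ for every automorphism $\varphi$ of $G$ that is a homeomorphism (for a Lie group: every continuous automorphism). *)

(* Defs.v *)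
From Stdlib Require Import Reals ZArith List.
Open Scope R_scope.

(* The group L = Z ⋉_alpha R, elements (z, r) : Z * R, with
   (z1, r1) * (z2, r2) = (z1 + z2, r1 + alpha^z1 * r2),
   so that (z,0)(0,r)(-z,0) = (0, alpha^z r). *)
Definition Lmul (alpha : R) (x y : Z * R) : Z * R :=
  ((fst x + fst y)%Z, snd x + powerRZ alpha (fst x) * snd y).

Definition Linv (alpha : R) (x : Z * R) : Z * R :=
  ((- fst x)%Z, - (powerRZ alpha (- fst x) * snd x)).

Definition is_hom (alpha : R) (f : Z * R -> Z * R) : Prop :=
  forall x y, f (Lmul alpha x y) = Lmul alpha (f x) (f y).

(* Continuity for the topology of Z (discrete) times R (usual):
   at every point (z, r), for every eps > 0 there is delta > 0 such that
   |s - r| < delta implies f(z,s) has the same Z-component as f(z,r) and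
   R-component within eps. *)
Definition L_continuous (f : Z * R -> Z * R) : Prop :=
  forall (z : Z) (r eps : R), 0 < eps -> exists delta, 0 < delta /\
    forall s, Rabs (s - r) < delta ->
      fst (f (z, s)) = fst (f (z, r)) /\
      Rabs (snd (f (z, s)) - snd (f (z, r))) < eps.

Definition topological_automorphism (alpha : R) (phi : Z * R -> Z * R) : Prop :=
  is_hom alpha phi /\ L_continuous phi /\
  exists psi : Z * R -> Z * R,
    (forall x, psi (phi x) = x) /\ (forall x, phi (psi x) = x) /\
    L_continuous psi.

Definition twisted_conj (alpha : R) (phi : Z * R -> Z * R) (x y : Z * R) : Prop :=
  exists g, y = Lmul alpha (Lmul alpha g x) (Linv alpha (phi g)).

(* R(phi) = infinity: there is no finite list of elements meeting every
   phi-twisted conjugacy class. *)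
Definition Reidemeister_infinite (alpha : R) (phi : Z * R -> Z * R) : Prop :=
  ~ exists l : list (Z * R),
      forall x, exists y, In y l /\ twisted_conj alpha phi y x.

Definition topological_R_infinity (alpha : R) : Prop :=
  forall phi, topological_automorphism alpha phi -> Reidemeister_infinite alpha phi.

(* Main.v *)
Require Import Defs.
From Stdlib Require Import Reals ZArith List Lia Lra.
Open Scope R_scope.

Lemma fst_zero (alpha : R) (phi : Z * R -> Z * R) :
  alpha <> 1 -> is_hom alpha phi -> forall r, fst (phi (0%Z, r)) = 0%Z.
Proof.
  intros h1 H r.
  set (t := r / (alpha - 1)).
  assert (E : Lmul alpha (1%Z, 0) (0%Z, t) =
              Lmul alpha (Lmul alpha (0%Z, r) (0%Z, t)) (1%Z, 0)).
  { unfold Lmul; simpl. f_equal. unfold t. field. intro; apply h1; lra. }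
  assert (E2 := f_equal (fun x => fst (phi x)) E). simpl in E2.
  rewrite !H in E2. unfold Lmul in E2. simpl in E2. lia.
Qed.

Lemma fst_lin (alpha : R) (phi : Z * R -> Z * R) :
  is_hom alpha phi -> forall z r,
  fst (phi (z, r)) = (z * fst (phi (1%Z, 0%R)) + fst (phi (0%Z, r)))%Z.
Proof.
  intros H.
  assert (Hg : forall z1 z2, fst (phi ((z1 + z2)%Z, 0)) =
     (fst (phi (z1, 0%R)) + fst (phi (z2, 0%R)))%Z).
  { intros. assert (E : ((z1+z2)%Z, 0) = Lmul alpha (z1, 0) (z2, 0)).
    { unfold Lmul; simpl; f_equal; ring. }
    rewrite E, H. reflexivity. }
  assert (G : forall z, fst (phi (z, 0)) = (z * fst (phi (1%Z, 0%R)))%Z).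
  { assert (G0 : fst (phi (0%Z, 0)) = 0%Z).
    { specialize (Hg 0%Z 0%Z). simpl in Hg. lia. }
    apply Z.peano_ind.
    - rewrite G0. lia.
    - intros x IH. rewrite <- Z.add_1_r, Hg, IH. lia.
    - intros x IH. assert (Hx := Hg (Z.pred x) 1%Z).
      replace (Z.pred x + 1)%Z with x in Hx by lia. lia. }
  intros z r.
  assert (E : (z, r) = Lmul alpha (0%Z, r) (z, 0)).
  { unfold Lmul; simpl; f_equal; ring. }
  rewrite E, H. unfold Lmul at 1. simpl. rewrite G. lia.
Qed.

Lemma small_zero (f : R -> R) (beta : R) :
  Rabs beta < 1 ->
  (forall r, f r = beta * f (beta * r)) ->
  (exists delta, 0 < delta /\ forall s, Rabs s < delta -> Rabs (f s) < 1) ->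
  forall r, f r = 0.
Proof.
  intros Hb Hf [delta [Hd Hc]] r.
  assert (It : forall n, f r = beta ^ n * f (beta ^ n * r)).
  { induction n. simpl. rewrite Rmult_1_l, Rmult_1_l; reflexivity.
    rewrite IHn, (Hf (beta ^ n * r)). simpl.
    replace (beta * (beta ^ n * r)) with (beta * beta ^ n * r) by ring. ring. }
  destruct (Req_dec (f r) 0) as [|Hne]; auto. exfalso.
  assert (Hpos : 0 < Rabs (f r)) by (apply Rabs_pos_lt; auto).
  assert (Hr : 0 < Rabs r + 1) by (pose proof (Rabs_pos r); lra).
  assert (Hy : 0 < Rmin (delta / (Rabs r + 1)) (Rabs (f r))).
  { apply Rmin_glb_lt; auto. apply Rdiv_lt_0_compat; auto. }
  destruct (pow_lt_1_zero beta Hb _ Hy) as [N HN].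
  specialize (HN N (le_n N)).
  assert (H1 := Rmin_l (delta / (Rabs r + 1)) (Rabs (f r))).
  assert (H2 := Rmin_r (delta / (Rabs r + 1)) (Rabs (f r))).
  assert (Hs : Rabs (beta ^ N * r) < delta).
  { rewrite Rabs_mult.
    assert (Rabs (beta ^ N) * (Rabs r + 1) < delta).
    { apply Rlt_le_trans with (delta / (Rabs r + 1) * (Rabs r + 1)).
      apply Rmult_lt_compat_r; lra. right; field; lra. }
    pose proof (Rabs_pos (beta ^ N)). nra. }
  specialize (Hc _ Hs).
  assert (E := f_equal Rabs (It N)). rewrite Rabs_mult in E.
  pose proof (Rabs_pos (beta ^ N)). pose proof (Rabs_pos (f (beta ^ N * r))).
  nra.
Qed.

Theorem mainTheorem7 (alpha : R) (h0 : alpha <> 0) (h1 : alpha <> 1)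
  (hm1 : alpha <> -1) : topological_R_infinity alpha.
Proof.
  intros phi [H [Hc [psi [Hpsi1 [Hpsi2 _]]]]].
  pose proof (fst_zero alpha phi h1 H) as F0.
  pose proof (fst_lin alpha phi H) as FL.
  set (k := fst (phi (1%Z, 0))) in *.
  assert (Hk : k = 1%Z \/ k = (-1)%Z).
  { assert (E := f_equal fst (Hpsi2 (1%Z, 0))). simpl in E.
    destruct (psi (1%Z, 0)) as [m s]. rewrite FL, F0 in E.
    apply (Z.mul_eq_1 k m). lia. }
  destruct Hk as [Hk | Hk].
  -
    intros [l Hl].
    set (M := fold_right (fun y acc => (Z.abs (fst y) + acc)%Z) 0%Z l).
    assert (HM : forall y, In y l -> (Z.abs (fst y) <= M)%Z).
    { unfold M. clear. induction l as [|a l IH]; simpl; intros y Hy.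
      destruct Hy. assert (0 <= fold_right (fun y acc => (Z.abs (fst y) + acc)%Z) 0%Z l)%Z.
      { clear. induction l; simpl; lia. }
      destruct Hy as [<-|Hy]. lia. specialize (IH y Hy). lia. }
    destruct (Hl ((M + 1)%Z, 0)) as [y [Hy [g Hg]]].
    specialize (HM y Hy).
    assert (E := f_equal fst Hg). unfold Lmul, Linv in E. simpl in E.
    destruct g as [gz gr]. rewrite FL, F0 in E. rewrite Hk in E. clear -HM E. clearbody M. destruct y as [yz yr]. simpl in *. lia.
  -
    exfalso.
    set (f := fun r => snd (phi (0%Z, r))).
    assert (Pf : forall r, phi (0%Z, r) = (0%Z, f r)).
    { intro r. unfold f. pose proof (F0 r) as E. destruct (phi (0%Z, r)) as [a b]. simpl in *. subst. reflexivity. }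
    assert (Rel : forall r, f (alpha * r) = / alpha * f r).
    { intro r.
      assert (E : Lmul alpha (1%Z, 0) (0%Z, r) = Lmul alpha (0%Z, alpha * r) (1%Z, 0)).
      { unfold Lmul; simpl; f_equal; ring. }
      assert (E2 := f_equal phi E). rewrite !H, !Pf in E2.
      assert (Ea : fst (phi (1%Z, 0)) = (-1)%Z) by exact Hk.
      destruct (phi (1%Z, 0)) as [a c]. simpl in Ea. subst a. unfold Lmul in E2. simpl in E2.
      injection E2. intros. simpl in *. rewrite Rmult_1_r in *. lra. }
    assert (f0 : f 0 = 0).
    { assert (E : Lmul alpha (0%Z, 0) (0%Z, 0) = (0%Z, 0)).
      { unfold Lmul; simpl; f_equal; ring. }
      assert (E2 := f_equal phi E). rewrite H, !Pf in E2.
      unfold Lmul in E2. simpl in E2. injection E2. lra. }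
    assert (Cont : exists delta, 0 < delta /\ forall s, Rabs s < delta -> Rabs (f s) < 1).
    { destruct (Hc 0%Z 0 1 Rlt_0_1) as [d [Hd Hs]]. exists d; split; auto.
      intros s Hs'. destruct (Hs s) as [_ Hs2]. rewrite Rminus_0_r; auto.
      change (Rabs (f s - f 0) < 1) in Hs2. rewrite f0, Rminus_0_r in Hs2. exact Hs2. }
    assert (Zf : forall r, f r = 0).
    { destruct (Rlt_or_le (Rabs alpha) 1) as [Hlt | Hge].
      - apply (small_zero f alpha Hlt); auto.
        intro r. rewrite Rel. field. auto.
      - assert (Rabs alpha <> 1).
        { intro E. unfold Rabs in E. destruct (Rcase_abs alpha); lra. }
        apply (small_zero f (/ alpha)); auto.
        + rewrite Rabs_inv, <- Rinv_1. apply Rinv_0_lt_contravar; lra.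
        + intro r. rewrite <- Rel. replace (alpha * (/ alpha * r)) with r by (field; auto).
          reflexivity. }
    assert (E : phi (0%Z, 1) = phi (0%Z, 0)) by (rewrite !Pf, !Zf; reflexivity).
    assert (E2 := f_equal psi E). rewrite !Hpsi1 in E2. injection E2. lra.
Qed.
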